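(* Let $N,S,d\ge 1$ be integers and let $\pi$ be a next-token distribution on $[N]^S$ such that $\pi(t_{S+1}\mid t_{1:S})\neq 0$ for all $t_{1:S}\in[N]^S$ and $t_{S+1}\in[N]$ (all conditional distributions have full support). Then there exists $f\in\mathcal{L}(N,S,d)$ such that $d_{KL}(\pi,f)=d_{KL}(\pi,\mathcal{L}(N,S,d))$.
   Context: $[N]=\{1,\dots,N\}$. A next-token distribution $\pi$ consists of a prior probability distribution on $[N]^S$ together with, for each $t_{1:S}\in[N]^S$, a conditional probability distribution $\pi_{t_{1:S}}=\pi(\cdot\mid t_{1:S})$ on $[N]$. For $f:[N]^S\to\mathbb{R}^N$, $d_{KL}(\pi,f):=\mathbb{E}_{t_{1:S}\sim\pi}\big[\mathrm{KL}(\pi_{t_{1:S}}\,\|\,\mathrm{Softmax}(f(t_{1:S})))\big]$. The set of sequence encoders is $\mathcal{L}(N,S,d):=\{f_{W,E}: W\in\mathbb{R}^{N\times d},\ E:[N]^S\to\mathbb{R}^d\}$ with $f_{W,E}(t_{1:S})=W E(t_{1:S})$, and $d_{KL}(\pi,\mathcal{L}(N,S,d)):=\inf_{f\in\mathcal{L}(N,S,d)}d_{KL}(\pi,f)$. *)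

(* Defs.v *)
From HB Require Import structures.
From mathcomp Require Import all_boot all_order all_algebra.
From mathcomp Require Import all_classical all_reals all_analysis.
Set Implicit Arguments. Unset Strict Implicit. Unset Printing Implicit Defensive.
Import Order.TTheory GRing.Theory Num.Theory.
Local Open Scope ring_scope.
Local Open Scope classical_set_scope.

Section Defs.
Variables (R : realType) (N S d : nat).

Definition ctx := (S.-tuple 'I_N)%type.

(* prior : probability distribution on [N]^S ; cond t : probability on [N] *)
Definition is_next_token_dist (prior : ctx -> R) (cond : ctx -> 'I_N -> R) : Prop :=
  (forall t, 0 <= prior t) /\ \sum_(t : ctx) prior t = 1 /\
  (forall t i, 0 <= cond t i) /\ (forall t, \sum_(i < N) cond t i = 1).

Definition softmax (z : 'cV[R]_N) : 'I_N -> R :=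
  fun i => expR (z i ord0) / \sum_(j < N) expR (z j ord0).

(* KL(p || q) = sum_i p_i log(p_i / q_i)  (0 log 0 = 0 since ln 0 = 0 here) *)
Definition KL (p q : 'I_N -> R) : R :=
  \sum_(i < N) (if p i == 0 then 0 else p i * ln (p i / q i)).

Definition dKL (prior : ctx -> R) (cond : ctx -> 'I_N -> R)
  (f : ctx -> 'cV[R]_N) : R :=
  \sum_(t : ctx) prior t * KL (cond t) (softmax (f t)).

Definition encoder (W : 'M[R]_(N, d)) (E : ctx -> 'cV[R]_d) : ctx -> 'cV[R]_N :=
  fun t => W *m E t.

Definition encoders : set (ctx -> 'cV[R]_N) :=
  [set f | exists (W : 'M[R]_(N, d)) (E : ctx -> 'cV[R]_d), f = encoder W E].

Definition dKL_L (prior : ctx -> R) (cond : ctx -> 'I_N -> R) : R :=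
  inf [set dKL prior cond f | f in encoders].

End Defs.

(* Main.v *)
Require Import Defs.
From HB Require Import structures.
From mathcomp Require Import all_boot all_order all_algebra.
From mathcomp Require Import all_classical all_reals all_analysis.
From mathcomp Require Import ring lra.
Import Order.TTheory GRing.Theory Num.Theory.
Local Open Scope ring_scope.
Set Implicit Arguments. Unset Strict Implicit.

Lemma sqr_sum_eq0 (R : realType) N (w : 'cV[R]_N) :
  (w^T *m w) 0 0 = 0 -> w = 0.
Proof.
rewrite !mxE => /eqP; rewrite psumr_eq0; last by move=> i _; rewrite !mxE -expr2 sqr_ge0.
move=> /allP H; apply/matrixP => i j; rewrite (ord1 j) !mxE.
have := H i (mem_index_enum _); rewrite /= !mxE -expr2 sqrf_eq0; exact/eqP.
Qed.

Lemma sqr_le_sum (R : realType) N (w : 'cV[R]_N) i :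
  w i 0 ^+ 2 <= (w^T *m w) 0 0.
Proof.
rewrite mxE (bigD1 i) //= !mxE -expr2 lerDl sumr_ge0 // => k _.
by rewrite !mxE -expr2 sqr_ge0.
Qed.

Lemma trZ (R : realType) N (c : R) (w : 'cV[R]_N) :
  ((c *: w)^T *m (c *: w)) 0 0 = c ^+ 2 * (w^T *m w) 0 0.
Proof.
rewrite !mxE mulr_sumr; apply: eq_bigr => k _; rewrite !mxE; ring.
Qed.

Lemma GS (R : realType) (N : nat) : forall n (W0 : 'M[R]_(N,n)),
  exists (W : 'M[R]_(N, n)) (C : 'M[R]_(n, n)),
    W0 = W *m C /\ W *m W^T *m W = W /\ forall i j, `|W i j| <= 1.
Proof.
elim=> [|n IH] W0.
  exists W0, 1%:M; split; first by rewrite mulmx1.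
  by split; [rewrite !thinmx0 | move=> i []].
pose W1 : 'M[R]_(N, (1 + n)) := W0.
pose w := lsubmx W1; pose V0 := rsubmx W1.
have [V [C [V0E [VV Vb]]]] := IH V0.
pose w' := w - V *m V^T *m w.
pose s := (w'^T *m w') 0 0.
pose u := (Num.sqrt s)^-1 *: w'.
have F1 : V^T *m w' = 0.
  rewrite /w' mulmxBr !mulmxA.
  have -> : V^T *m V *m V^T = V^T by rewrite -[RHS](congr1 trmx VV) !trmx_mul trmxK mulmxA.
  by rewrite subrr.
have s0 : 0 <= s by rewrite /s mxE sumr_ge0 // => k _; rewrite !mxE -expr2 sqr_ge0.
have F3 : w' = Num.sqrt s *: u.
  have [s0'|sn0] := eqVneq s 0.
    by rewrite s0' sqrtr0 scale0r; apply: sqr_sum_eq0.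
  by rewrite /u scalerA divff ?scale1r // sqrtr_eq0 -ltNge lt_neqAle eq_sym sn0.
have Fu : V^T *m u = 0 by rewrite /u -scalemxAr F1 scaler0.
have F4 : u *m (u^T *m u) = u.
  have [s0'|sn0] := eqVneq s 0.
    by rewrite /u s0' sqrtr0 invr0 scale0r !mul0mx.
  have -> : u^T *m u = 1%:M.
    apply/matrixP => i j; rewrite (ord1 i) (ord1 j) /u.
    by rewrite trZ -/s exprVn sqr_sqrtr // mulVf // mxE.
  by rewrite mulmx1.
have Fb : forall i, `|u i 0| <= 1.
  move=> i; suff h : u i 0 ^+ 2 <= 1.
    by rewrite -(@ler_pXn2r _ 2) ?nnegrE // expr1n real_normK ?num_real.
  apply: (le_trans (sqr_le_sum u i)).
  have [s0'|sn0] := eqVneq s 0.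
    by rewrite /u s0' sqrtr0 invr0 scale0r trmx0 mul0mx mxE.
  by rewrite /u trZ -/s exprVn sqr_sqrtr // mulVf.
pose Wn : 'M[R]_(N, (1 + n)) := row_mx u V.
pose Cn : 'M[R]_((1 + n), (1 + n)) := block_mx (Num.sqrt s)%:M 0 (V^T *m w) C.
have E1 : W1 = Wn *m Cn.
  rewrite /Wn /Cn mul_row_block mulmx0 add0r -V0E mul_mx_scalar -F3 /w' mulmxA subrK.
  by rewrite /w /V0 hsubmxK.
have E2 : Wn *m Wn^T *m Wn = Wn.
  rewrite /Wn tr_row_mx mul_row_col mulmxDl mul_mx_row mul_mx_row.
  have uV : u^T *m V = 0 by rewrite -[u^T *m V]trmxK trmx_mul trmxK Fu trmx0.
  rewrite -!mulmxA Fu uV F4 !mulmx0 add_row_mx addr0 add0r.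
  by rewrite mulmxA VV.
have E3 : forall i j, `|Wn i j| <= 1.
  move=> i j; rewrite mxE; case: splitP => k _; last exact: Vb.
  by rewrite (ord1 k); exact: Fb.
by exists Wn, Cn.
Qed.

Section B.
Variables (R : realType) (N S : nat).
Hypothesis hN : (1 <= N)%N.
Variables (prior : ctx N S -> R) (cond : ctx N S -> 'I_N -> R).
Hypothesis hpi : is_next_token_dist prior cond.
Hypothesis hfull : forall t i, cond t i != 0.

Lemma pr_ge0 t : 0 <= prior t. Proof. by case: hpi. Qed.
Lemma c_gt0 t i : 0 < cond t i.
Proof. by case: hpi => _ [_ [h _]]; rewrite lt_neqAle eq_sym hfull h. Qed.
Lemma c_sum t : \sum_i cond t i = 1. Proof. by case: hpi => _ [_ [_ h]]. Qed.

Definition lse (z : 'cV[R]_N) := ln (\sum_j expR (z j 0)).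
Definition gf t (z : 'cV[R]_N) := lse z - \sum_i cond t i * z i 0.
Definition G (f : ctx N S -> 'cV[R]_N) := \sum_t prior t * gf t (f t).
Definition Hc := \sum_t prior t * \sum_i cond t i * ln (cond t i).

Lemma sumexp_gt0 (z : 'cV[R]_N) : 0 < \sum_j expR (z j 0).
Proof.
rewrite (bigD1 (Ordinal hN)) //= ltr_wpDr ?expR_gt0 //.
by rewrite sumr_ge0 // => k _; rewrite expR_ge0.
Qed.

Lemma lse_ge (z : 'cV[R]_N) k : z k 0 <= lse z.
Proof.
rewrite /lse -{1}(expRK (z k 0)) ler_ln ?posrE ?expR_gt0 ?sumexp_gt0 //.
rewrite (bigD1 k) //= lerDl sumr_ge0 // => j _; exact: expR_ge0.
Qed.

Lemma gf_eq t (z : 'cV[R]_N) : gf t z = \sum_i cond t i * (lse z - z i 0).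
Proof.
rewrite /gf; under [RHS]eq_bigr do rewrite mulrBr.
by rewrite sumrB -mulr_suml c_sum mul1r.
Qed.

Lemma gf_ge0 t (z : 'cV[R]_N) : 0 <= gf t z.
Proof.
rewrite gf_eq sumr_ge0 // => i _; rewrite mulr_ge0 ?subr_ge0 ?lse_ge //.
exact: ltW (c_gt0 t i).
Qed.

Lemma gf_spread t (z : 'cV[R]_N) a b : cond t b * (z a 0 - z b 0) <= gf t z.
Proof.
rewrite gf_eq (bigD1 b) //= ler_wpDr //.
  by rewrite sumr_ge0 // => i _; rewrite mulr_ge0 ?subr_ge0 ?lse_ge // ltW ?c_gt0.
apply: ler_wpM2l; first exact: ltW (c_gt0 t b).
by rewrite lerD2r lse_ge.
Qed.

Lemma KL_eq t (z : 'cV[R]_N) : KL (cond t) (softmax z) = \sum_i cond t i * ln (cond t i) + gf t z.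
Proof.
rewrite gf_eq -big_split /KL; apply: eq_bigr => i _ /=.
rewrite (negbTE (hfull t i)) /softmax.
have cp := c_gt0 t i; have sp := sumexp_gt0 z; have ep := expR_gt0 (z i 0).
rewrite lnM ?posrE ?invr_gt0 ?divr_gt0 // lnV ?posrE ?divr_gt0 //.
rewrite lnM ?posrE ?invr_gt0 // lnV ?posrE // expRK /lse; ring.
Qed.

Lemma dKL_eq f : dKL prior cond f = Hc + G f.
Proof.
rewrite /dKL /Hc /G -big_split; apply: eq_bigr => t _ /=.
by rewrite KL_eq mulrDr.
Qed.

Lemma G_ge0_term f t : prior t * gf t (f t) <= G f.
Proof.
rewrite /G (bigD1 t) //= lerDl sumr_ge0 // => s _.
by rewrite mulr_ge0 ?pr_ge0 ?gf_ge0.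
Qed.

Lemma gf_shift t (z : 'cV[R]_N) c : gf t (z + const_mx c) = gf t z.
Proof.
rewrite /gf /lse.
have -> : \sum_j expR ((z + const_mx c) j 0) = expR c * \sum_j expR (z j 0).
  by rewrite mulr_sumr; apply: eq_bigr => j _; rewrite !mxE expRD mulrC.
rewrite lnM ?posrE ?expR_gt0 ?sumexp_gt0 // expRK.
have -> : \sum_i cond t i * (z + const_mx c) i 0 = \sum_i cond t i * z i 0 + c.
  rewrite -{2}[c]mul1r -(c_sum t) mulr_suml -big_split; apply: eq_bigr => i _.
  by rewrite !mxE mulrDr.
ring.
Qed.

Definition Pm : 'M[R]_N := 1%:M - N%:R^-1 *: const_mx 1.

Lemma PmE (z : 'cV[R]_N) : Pm *m z = z + const_mx (- (N%:R^-1 * \sum_j z j 0)).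
Proof.
apply/matrixP => i k; rewrite (ord1 k) /Pm mulmxBl mul1mx -scalemxAl !mxE.
by congr (_ - _ * _); apply: eq_bigr => j _; rewrite !mxE mul1r.
Qed.

Lemma gf_Pm t (z : 'cV[R]_N) : gf t (Pm *m z) = gf t z.
Proof. by rewrite PmE gf_shift. Qed.

Lemma center_bound t (z : 'cV[R]_N) c0 B : prior t != 0 ->
  prior t * gf t z <= c0 -> (forall a, c0 / (prior t * cond t a) <= B) ->
  forall i, `|(Pm *m z) i 0| <= B.
Proof.
move=> p0 hc hB i.
have pp : 0 < prior t by rewrite lt_neqAle eq_sym p0 pr_ge0.
have D : forall a b, z a 0 - z b 0 <= B.
  move=> a b; apply: le_trans (hB b).
  have cb := c_gt0 t b.
  rewrite ler_pdivlMr ?mulr_gt0 //; apply: le_trans hc.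
  rewrite mulrC -mulrA; apply: ler_wpM2l; [exact: ltW | exact: gf_spread].
have Np : 0 < N%:R :> R by rewrite ltr0n.
rewrite PmE !mxE.
have -> : z i 0 + - (N%:R^-1 * \sum_j z j 0) = N%:R^-1 * \sum_j (z i 0 - z j 0).
  rewrite sumrB sumr_const card_ord.
  by rewrite -[z i 0 *+ N]mulr_natr mulrBr mulrCA mulVf ?gt_eqF // mulr1.
rewrite normrM ger0_norm ?invr_ge0 ?ler0n // ler_pdivrMl //.
apply: le_trans (ler_norm_sum _ _ _) _.
have -> : N%:R * B = \sum_(j < N) B by rewrite sumr_const card_ord mulr_natl.
apply: ler_sum => j _.
by rewrite ler_norml D andbT lerNl opprB D.
Qed.

End B.

Section C.
Variables (R : realType) (N S d : nat).
Hypothesis hN : (1 <= N)%N.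
Variables (prior : ctx N S -> R) (cond : ctx N S -> 'I_N -> R).
Hypothesis hpi : is_next_token_dist prior cond.
Hypothesis hfull : forall t i, cond t i != 0.

Local Notation G := (G prior cond).
Local Notation gf := (gf cond).

Definition Bnd (c0 : R) := \sum_t \sum_a (if prior t == 0 then 0 else c0 / (prior t * cond t a)).

Lemma reduce (c0 : R) (W0 : 'M[R]_(N, d)) (E0 : ctx N S -> 'cV[R]_d) :
  0 <= c0 -> G (encoder W0 E0) <= c0 ->
  exists (W : 'M[R]_(N, d)) (E : ctx N S -> 'cV[R]_d),
    (forall i j, `|W i j| <= 1 + N%:R * Bnd c0) /\
    (forall t k, `|E t k 0| <= 1 + N%:R * Bnd c0) /\
    G (encoder W E) = G (encoder W0 E0).
Proof.
move=> c0ge hG.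
have pc : forall t a, 0 <= prior t * cond t a.
  by move=> t a; apply: mulr_ge0; [exact: pr_ge0 hpi t | exact: ltW (c_gt0 hpi hfull t a)].
have B0 : 0 <= Bnd c0.
  rewrite sumr_ge0 // => t _; rewrite sumr_ge0 // => a _; case: ifPn => // p0.
  by exact: divr_ge0 c0ge (pc _ _).
have M1 : 1 <= 1 + N%:R * Bnd c0 by rewrite lerDl mulr_ge0 ?ler0n.
pose W1 := Pm R N *m W0.
pose E1 t := if prior t == 0 then 0 else E0 t.
have [W [C [W1E [WW Wb]]]] := GS W1.
pose E t := W^T *m (W1 *m E1 t).
have encE : forall t, encoder W E t = W1 *m E1 t.
  by move=> t; rewrite /encoder /E W1E !mulmxA WW.
have Bz : forall t i, `|(W1 *m E1 t) i 0| <= Bnd c0.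
  move=> t i; rewrite /E1; case: ifPn => p0.
    by rewrite mulmx0 mxE normr0.
  rewrite /W1 -mulmxA; apply: (center_bound hN hpi hfull p0).
    exact: le_trans (G_ge0_term hN hpi hfull (encoder W0 E0) t) hG.
  move=> a; rewrite /Bnd (bigD1 t) //= (bigD1 a) //= (negbTE p0) -addrA lerDl.
  apply: addr_ge0.
    by apply: sumr_ge0 => b _; exact: divr_ge0 c0ge (pc _ _).
  apply: sumr_ge0 => s _; apply: sumr_ge0 => b _; case: ifPn => // _.
  by exact: divr_ge0 c0ge (pc _ _).
exists W, E; split; last split.
- by move=> i j; apply: le_trans (Wb i j) M1.
- move=> t k; rewrite /E mxE; apply: le_trans (ler_norm_sum _ _ _) _.
  apply: le_trans (_ : \sum_(i < N) Bnd c0 <= _); last first.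
    by rewrite sumr_const card_ord mulr_natl addrC lerDl.
  apply: ler_sum => i _; rewrite mxE normrM -[X in _ <= X]mul1r.
  apply: ler_pM => //.
- rewrite /G; apply: eq_bigr => t _; rewrite encE /E1.
  case: ifPn => [/eqP -> | p0]; first by rewrite !mul0r.
  by rewrite /W1 -mulmxA (gf_Pm hN hpi).
Qed.
End C.

Unset Implicit Arguments. Set Strict Implicit.
Import numFieldTopology.Exports numFieldNormedType.Exports.

Lemma cont_sum (R : realType) (T : topologicalType) (I : finType) (F : I -> T -> R) :
  (forall i, continuous (F i)) -> continuous (fun x => \sum_i F i x).
Proof. move=> cF; exact: (@continuous_big R I +%R 0 xpredT add_continuous T (index_enum I) F). Qed.

Lemma cont_mul (R : realType) (T : topologicalType) (f g : T -> R) :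
  continuous f -> continuous g -> continuous (fun x => f x * g x).
Proof. by move=> cf cg x; exact: continuousM (cf x) (cg x). Qed.

Lemma cont_sub (R : realType) (T : topologicalType) (f g : T -> R) :
  continuous f -> continuous g -> continuous (fun x => f x - g x).
Proof. by move=> cf cg x; exact: continuousB (cf x) (cg x). Qed.

Lemma cont_cst (R : realType) (T : topologicalType) (c : R) :
  continuous (fun _ : T => c).
Proof. exact: cst_continuous. Qed.

Section D.
Variables (R : realType) (N S d : nat).
Hypothesis hN : (1 <= N)%N.
Variables (prior : ctx N S -> R) (cond : ctx N S -> 'I_N -> R).
Hypothesis hpi : is_next_token_dist prior cond.
Hypothesis hfull : forall t i, cond t i != 0.

Local Notation Ix := ('I_N * 'I_d + 'I_d * ctx N S)%type.
Local Notation n := #|{: Ix}|.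

Definition Wof (v : 'rV[R]_n) : 'M[R]_(N, d) :=
  \matrix_(i, j) v ord0 (enum_rank (inl (i, j) : Ix)).
Definition Eof (v : 'rV[R]_n) : ctx N S -> 'cV[R]_d :=
  fun t => \col_k v ord0 (enum_rank (inr (k, t) : Ix)).
Definition toV (W : 'M[R]_(N, d)) (E : ctx N S -> 'cV[R]_d) : 'rV[R]_n :=
  \row_m (match enum_val m with inl (i, j) => W i j | inr (k, t) => E t k 0 end).

Lemma WofK W E : Wof (toV W E) = W.
Proof. by apply/matrixP => i j; rewrite !mxE enum_rankK. Qed.
Lemma EofK W E : Eof (toV W E) = E.
Proof.
apply/funext => t; apply/matrixP => k l; rewrite (ord1 l) !mxE enum_rankK.
by [].
Qed.

Definition h (v : 'rV[R]_n) := G prior cond (encoder (Wof v) (Eof v)).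

Lemma h_cont : continuous h.
Proof.
have cc : forall m, continuous (fun v : 'rV[R]_n => v ord0 m).
  by move=> m; exact: coord_continuous.
have cz : forall t i, continuous (fun v => (Wof v *m Eof v t) i 0).
  move=> t i.
  have -> : (fun v => (Wof v *m Eof v t) i 0) = fun v =>
      \sum_k v ord0 (enum_rank (inl (i, k) : Ix)) * v ord0 (enum_rank (inr (k, t) : Ix)).
    by apply/funext => v; rewrite mxE; apply: eq_bigr => k _; rewrite !mxE.
  by apply: cont_sum => k; apply: cont_mul.
rewrite /h /G /gf /lse /encoder.
apply: cont_sum => t; apply: cont_mul; first exact: cont_cst.
apply: cont_sub; last first.
  by apply: cont_sum => i; apply: cont_mul; [exact: cont_cst | exact: cz].
move=> v; apply: (continuous_comp (f := fun v => \sum_j expR ((Wof v *m Eof v t) j 0))).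
  by apply: cont_sum => j x; apply: (continuous_comp (cz t j x)); exact: continuous_expR.
by apply: continuous_ln; exact: sumexp_gt0.
Qed.

End D.

Local Open Scope classical_set_scope.

Theorem lemma1 (R : realType) (N S d : nat) (hN : (1 <= N)%N) (hS : (1 <= S)%N)
  (hd : (1 <= d)%N) (prior : ctx N S -> R) (cond : ctx N S -> 'I_N -> R)
  (hpi : is_next_token_dist prior cond)
  (hfull : forall t i, cond t i != 0) :
  exists f : ctx N S -> 'cV[R]_N, @encoders R N S d f /\ dKL prior cond f = @dKL_L R N S d prior cond.
Proof.
pose hh := @h R N S d prior cond.
pose c0 := hh 0.
have c0ge : 0 <= c0.
  by rewrite /c0 /hh /h /G sumr_ge0 // => t _; rewrite mulr_ge0 ?(pr_ge0 hpi) ?(gf_ge0 hN hpi hfull).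
pose M := 1 + N%:R * Bnd prior cond c0.
have M0 : 0 <= M.
  rewrite /M addr_ge0 // mulr_ge0 ?ler0n //.
  apply: sumr_ge0 => t _; apply: sumr_ge0 => a _; case: ifPn => // _.
  rewrite divr_ge0 //; apply: mulr_ge0; first exact: pr_ge0 hpi t.
  exact: ltW (c_gt0 hpi hfull t a).
pose nn := #|{: ('I_N * 'I_d + 'I_d * ctx N S)%type}|.
pose K : set 'rV[R]_nn := [set v | forall m, (`[- M, M]%classic : set R) (v ord0 m)].
have Kc : compact K.
  by apply: (@rV_compact _ _ (fun=> `[- M, M]%classic)) => _; exact: segment_compact.
have K0 : K 0 by move=> m; rewrite /= mxE in_itv /= oppr_le0 M0.
have [c cK cmin] := compact_EVT_min (ex_intro _ 0 K0) Kc
  (continuous_subspaceT (A:=K) (h_cont R N S d hN prior cond)).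
pose fs := encoder (Wof R N S d c) (Eof R N S d c).
have lb : forall f, @encoders R N S d f -> dKL prior cond fs <= dKL prior cond f.
  move=> f [W0 [E0 ->]]; rewrite !(dKL_eq hN hpi hfull) lerD2l.
  have -> : G prior cond fs = hh c by [].
  have [hG|hG] := leP (G prior cond (encoder W0 E0)) c0.
    have [W [E [Wb [Eb GE]]]] := reduce hN hpi hfull c0ge hG.
    rewrite -GE.
    have KV : K (toV R N S d W E).
      move=> m; rewrite mxE; case: (enum_val m) => [[i j]|[k t]];
        rewrite /= in_itv /= -ler_norml; [exact: Wb | exact: Eb].
    by move: (cmin _ (mem_set KV)); rewrite /hh /h WofK EofK.
  by apply: le_trans (ltW hG); exact: cmin (mem_set K0).
exists fs; split; first by exists (Wof R N S d c), (Eof R N S d c).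
have fsE : @encoders R N S d fs by exists (Wof R N S d c), (Eof R N S d c).
rewrite /dKL_L; apply/eqP; rewrite eq_le; apply/andP; split.
  apply: lb_le_inf; first by exists (dKL prior cond fs), fs.
  by move=> y [f fE <-]; exact: lb.
have hl : has_lbound [set dKL prior cond f | f in @encoders R N S d].
  by exists (dKL prior cond fs) => y [f fE <-]; exact: lb.
by apply: (ge_inf hl); exists fs.
Qed.
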